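(* Let $a,b$ be positive integers, $d=\gcd(a,b)$, and suppose $a/d$ and $b/d$ are odd. Let $\alpha,\beta,\alpha',\beta'\in\mathbb{N}_0$ satisfy $d=\alpha a-\beta b$ and $-d=\alpha'a-\beta'b$, with $\alpha+\beta$ least possible and $\alpha'+\beta'$ least possible among such solutions. Then both $\alpha+\beta$ and $\alpha'+\beta'$ are odd, i.e. $E_{(-b,a)}^{(\infty,\infty)}$ is of case $(4')$.
   Context: $E_{(-b,a)}^{(\infty,\infty)}$ is the $\mathbb{Z}$-grading on the Grassmann algebra of an infinite-dimensional space with basis $e_1,e_2,\dots$ in which the basis is split into two infinite sets whose elements have degrees $-b$ and $a$ respectively (monomials get the sum of degrees). It is said to be of case $(4')$ when the minimal sums $\alpha+\beta$ and $\alpha'+\beta'$ defined in the claim are both odd. *)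

(* Defs.v *)
From mathcomp Require Import all_boot.
Set Implicit Arguments. Unset Strict Implicit. Unset Printing Implicit Defensive.

(* (al, be) in N_0^2 solves  d = al*a - be*b  (an identity in Z, written in nat
   without subtraction: al*a = d + be*b). *)
Definition sol_pos (a b d al be : nat) : Prop := al * a = d + be * b.
(* (al, be) solves  -d = al*a - be*b, i.e. al*a + d = be*b. *)
Definition sol_neg (a b d al be : nat) : Prop := al * a + d = be * b.

(* Main.v *)
Require Import Defs.
From mathcomp Require Import all_boot.

Theorem lemma4p12 (a b al be al' be' : nat) :
  0 < a -> 0 < b ->
  odd (a %/ gcdn a b) -> odd (b %/ gcdn a b) ->
  sol_pos a b (gcdn a b) al be ->
  (forall g h, sol_pos a b (gcdn a b) g h -> al + be <= g + h) ->
  sol_neg a b (gcdn a b) al' be' ->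
  (forall g h, sol_neg a b (gcdn a b) g h -> al' + be' <= g + h) ->
  odd (al + be) /\ odd (al' + be').
Proof.
move=> a0 _ ox oy; rewrite /sol_pos /sol_neg => Hp _ Hn _.
have d0 : 0 < gcdn a b by rewrite gcdn_gt0 a0.
have ea := divnK (dvdn_gcdl a b); have eb := divnK (dvdn_gcdr a b).
move: ox oy ea eb Hp Hn.
set d := gcdn a b; set x := a %/ d; set y := b %/ d.
move=> ox oy ea eb Hp Hn.
have Hp' : al * x = 1 + be * y.
  apply/eqP; rewrite -(eqn_pmul2r d0) mulnDl mul1n -!mulnA ea eb; exact/eqP.
have Hn' : al' * x + 1 = be' * y.
  apply/eqP; rewrite -(eqn_pmul2r d0) mulnDl mul1n -!mulnA ea eb; exact/eqP.
split.
- have := congr1 odd Hp'; rewrite !oddD !oddM ox oy /= !andbT => ->.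
  by case: (odd be).
- have := congr1 odd Hn'; rewrite !oddD !oddM ox oy /= !andbT => <-.
  by case: (odd al').
Qed.
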